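(* For any real number field $K$ and any $a,b\in K$ with $a>0$ and $b\neq 0$, there exist $x,y,z,u,v,w\in K$ satisfying $$x^2 - ay^2 + au^2 - bv^2 + abw^2 = 0,\qquad z^2 - 4 = au^2,\qquad \mathbb{Q}\left(x,\tfrac{y}{u},z\right) = K,$$ and $$u\neq 0,\quad x + \frac{yz}{2u} > 2,\quad \frac{y}{u}>1,\quad z>2,\quad abw^2 - bv^2 > 4.$$
   Context: A real number field is a field $K\subset\mathbb{R}$ with $[K:\mathbb{Q}]<\infty$. *)

(* Defs.v *)
From HB Require Import structures.
From mathcomp Require Import all_boot all_order all_algebra.
From mathcomp Require Import reals.
Set Implicit Arguments. Unset Strict Implicit. Unset Printing Implicit Defensive.
Import Order.TTheory GRing.Theory Num.Theory.
Local Open Scope ring_scope.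

Definition is_subfield (R : realType) (K : R -> Prop) : Prop :=
  K 0 /\ K 1 /\
  (forall x y, K x -> K y -> K (x + y)) /\
  (forall x, K x -> K (- x)) /\
  (forall x y, K x -> K y -> K (x * y)) /\
  (forall x, K x -> x != 0 -> K x^-1).

Definition finite_over_Q (R : realType) (K : R -> Prop) : Prop :=
  exists s : seq R, (forall e, e \in s -> K e) /\
    forall x, K x -> exists c : 'I_(size s) -> rat,
      x = \sum_(i < size s) ratr (c i) * s`_i.

Definition real_number_field (R : realType) (K : R -> Prop) : Prop :=
  is_subfield K /\ finite_over_Q K.

Definition gen_field (R : realType) (S : seq R) : R -> Prop :=
  fun t => forall F : R -> Prop, is_subfield F -> (forall e, e \in S -> F e) -> F t.

(* Main.v *)
Require Import Defs.
From HB Require Import structures.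
From mathcomp Require Import all_boot all_order all_algebra all_field.
From mathcomp Require Import reals ring lra.
From Stdlib Require Import ClassicalEpsilon.
Set Implicit Arguments. Unset Strict Implicit.
Import Order.TTheory GRing.Theory Num.Theory.
Local Open Scope ring_scope.

Section SF.
Variables (R : realType) (F : R -> Prop) (hF : is_subfield F).

Lemma sf0 : F 0. Proof. by case: hF. Qed.
Lemma sf1 : F 1. Proof. by case: hF => _ [H _]. Qed.
Lemma sfD x y : F x -> F y -> F (x + y). Proof. by case: hF => _ [_ [H _]]; apply: H. Qed.
Lemma sfN x : F x -> F (- x). Proof. by case: hF => _ [_ [_ [H _]]]; apply: H. Qed.
Lemma sfM x y : F x -> F y -> F (x * y). Proof. by case: hF => _ [_ [_ [_ [H _]]]]; apply: H. Qed.
Lemma sfV x : F x -> F x^-1.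
Proof.
have [->|nz] := eqVneq x 0; first by rewrite invr0 => _; apply: sf0.
by case: hF => _ [_ [_ [_ [_ H]]]] Fx; apply: H.
Qed.
Lemma sfB x y : F x -> F y -> F (x - y). Proof. by move=> *; apply: sfD => //; apply: sfN. Qed.
Lemma sfdiv x y : F x -> F y -> F (x / y). Proof. by move=> *; apply: sfM => //; apply: sfV. Qed.
Lemma sfX x n : F x -> F (x ^+ n).
Proof. by move=> Fx; elim: n => [|n IH]; [rewrite expr0; apply: sf1 | rewrite exprS; apply: sfM]. Qed.
Lemma sfn n : F n%:R.
Proof. by elim: n => [|n IH]; [apply: sf0 | rewrite -addn1 natrD; apply: sfD => //; apply: sf1]. Qed.
Lemma sfz (z : int) : F z%:~R.
Proof. by case: z => n; rewrite ?NegzE ?mulrNz; [apply: sfn | apply: sfN; apply: sfn]. Qed.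
Lemma sfr (q : rat) : F (ratr q).
Proof. by rewrite /ratr; apply: sfdiv; apply: sfz. Qed.
Lemma sfsum (I : Type) (r : seq I) (P : pred I) (f : I -> R) :
  (forall i, P i -> F (f i)) -> F (\sum_(i <- r | P i) f i).
Proof. by move=> H; apply: big_ind => //; [apply: sf0 | apply: sfD]. Qed.
Lemma sfpoly (q : {poly rat}) z : F z -> F ((map_poly ratr q).[z]).
Proof.
move=> Fz; rewrite horner_coef; apply: sfsum => i _.
by rewrite coef_map; apply: sfM; [apply: sfr | apply: sfX].
Qed.
End SF.

Lemma alg_el (R : realType) (K : R -> Prop) (hK : real_number_field K) e :
  K e -> exists2 p : {poly rat}, p != 0 & root (map_poly ratr p) e.
Proof.
case: hK => hS [s [sK span]] Ke.
set m := size s.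
have H (k : 'I_m.+1) : exists c : 'I_m -> rat,
    e ^+ k = \sum_(i < m) ratr (c i) * s`_i by apply: span; apply: sfX.
pose C k := proj1_sig (constructive_indefinite_description _ (H k)).
have HC (k : 'I_m.+1) : e ^+ k = \sum_(i < m) ratr (C k i) * s`_i.
  exact: proj2_sig (constructive_indefinite_description _ (H k)).
pose A : 'M[rat]_(m.+1, m) := \matrix_(k, i) C k i.
have nf : ~~ row_free A.
  apply/negP => /eqP Hr; have := rank_leq_col A; by rewrite Hr ltnn.
have nz : kermx A != 0 by rewrite kermx_eq0.
have [i nzi]: exists i, row i (kermx A) != 0.
  apply/existsP; apply: contraNT nz => /existsPn Hn; apply/eqP/row_matrixP => i.
  by rewrite row0; apply/eqP; rewrite -[_ == 0]negbK; apply: Hn.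
set u := row i (kermx A).
have uA : u *m A = 0 by apply/sub_kermxP; apply: row_sub.
pose p : {poly rat} := \poly_(k < m.+1) u 0 (inord k).
exists p.
  apply: contraNneq nzi => p0; apply/eqP/rowP => k.
  have := coef_poly m.+1 (fun k => u 0 (inord k)) k.
  rewrite -/p p0 coef0 ltn_ord inord_val.
  by move=> H0; rewrite [RHS]mxE; exact: (esym H0).
rewrite /root (@horner_coef_wide _ m.+1); last first.
  rewrite size_map_poly; exact: size_poly.
under eq_bigr => k _ do rewrite coef_map coef_poly ltn_ord inord_val (HC k) mulr_sumr.
rewrite exchange_big /= big1 // => j _.
have := congr1 (fun M : 'M[rat]_(1, m) => M 0 j) uA; rewrite !mxE => uAj.
under eq_bigr => k _ do rewrite mulrA -rmorphM /=.
rewrite -mulr_suml -rmorph_sum /=.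
under [X in ratr X]eq_bigr => k _ do rewrite mxE.
have E : \sum_(k < m.+1) kermx A i k * C k j = \sum_j0 u 0 j0 * A j0 j.
  by apply: eq_bigr => k _; rewrite !mxE.
by rewrite E uAj rmorph0 mul0r.
Qed.

Definition Pz (R : realType) (z t : R) :=
  forall F : R -> Prop, is_subfield F -> F z -> F t.

Lemma prim_list (R : realType) (K : R -> Prop) (hK : real_number_field K) (l : seq R) :
  (forall e, e \in l -> K e) -> exists th, K th /\ forall e, e \in l -> Pz th e.
Proof.
have hS := hK.1.
elim: l => [|e l IH] Hl.
  by exists 0; split; [apply: sf0 | move=> e].
have [th [Kth Hth]] : exists th, K th /\ forall e, e \in l -> Pz th e.
  by apply: IH => e' He'; apply: Hl; rewrite inE He' orbT.
have Ke : K e by apply: Hl; rewrite inE eqxx.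
have [p nzp pth] := alg_el hK Kth.
have [q nzq qe] := alg_el hK Ke.
have [n [[q1 Dth] [q2 De]]] := pchar0_PET nzp pth nzq qe (pchar_num _).
exists (e *+ n - th); split.
  by apply: sfB => //; rewrite -mulr_natr; apply: sfM => //; apply: sfn.
move=> e'; rewrite inE => /orP[/eqP-> | He'] F hF Fz.
  by rewrite -De; apply: sfpoly.
apply: (Hth _ He' F hF); rewrite -Dth; exact: sfpoly.
Qed.

Lemma prim (R : realType) (K : R -> Prop) (hK : real_number_field K) :
  exists th, K th /\ forall t, K t -> Pz th t.
Proof.
have hS := hK.1; case: (hK.2) => s [sK span].
have [th [Kth Hth]] := prim_list hK sK.
exists th; split => // t Kt F hF Fth.
have [c ->] := span t Kt.
apply: sfsum => // i _; apply: sfM => //; first exact: sfr.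
apply: (Hth _ _ F hF Fth); exact: mem_nth.
Qed.

Ltac cl h := repeat first [ assumption | apply: (sfn h) | apply: (sfr h)
  | apply: (sf1 h) | apply: (sf0 h) | apply: (sfD h) | apply: (sfN h)
  | apply: (sfM h) | apply: (sfV h) | apply: (sfX h) ].

Ltac sc := repeat (apply/andP; split); rewrite ?subrK ?pnatr_eq0 //.

Unset Implicit Arguments.
Theorem theorem3p1 (R : realType) (K : R -> Prop) (hK : real_number_field K)
    (a b : R) (Ka : K a) (Kb : K b) (ha : 0 < a) (hb : b != 0) :
  exists x y z u v w : R,
    (K x /\ K y /\ K z /\ K u /\ K v /\ K w) /\
    x ^+ 2 - a * y ^+ 2 + a * u ^+ 2 - b * v ^+ 2 + a * b * w ^+ 2 = 0 /\
    z ^+ 2 - 4 = a * u ^+ 2 /\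
    (forall t, gen_field [:: x; y / u; z] t <-> K t) /\
    [/\ u != 0, x + (y * z) / (2 * u) > 2, y / u > 1, z > 2 &
        a * b * w ^+ 2 - b * v ^+ 2 > 4].
Proof.
have hS := hK.1.
have [th0 [Kth0 Pth0]] := prim hK.
pose n := Num.bound `|th0|.
have hn : `|th0| < n%:R := archi_boundP (normr_ge0 _).
pose w0 := th0 + n%:R.
have w0pos : 0 < w0.
  have := ler_norm (- th0); rewrite normrN /w0 => h; lra.
pose B := Num.bound (a * w0 ^+ 2).
have hB : a * w0 ^+ 2 < B%:R by apply: archi_boundP; nra.
pose Nr : R := B.+1%:R.
have ENr : Nr = B%:R + 1 by rewrite /Nr -addn1 natrD.
have B0 : 0 <= B%:R :> R by [].
pose t := w0 / Nr.
pose tau := a * t ^+ 2.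
have Nr0 : 0 < Nr by rewrite ENr; lra.
have t0 : 0 < t by rewrite /t divr_gt0.
have tau0 : 0 < tau by rewrite /tau mulr_gt0 // exprn_gt0.
have tau1 : tau < 1.
  have E : tau * Nr ^+ 2 = a * w0 ^+ 2.
    by rewrite /tau /t; field; rewrite gt_eqF.
  rewrite ENr in E; nra.
pose z := 2 * (1 + tau) / (1 - tau).
pose u := 4 * t / (1 - tau).
have tau1' : 1 - tau != 0 by rewrite subr_eq0 gt_eqF.
have u0 : 0 < u by rewrite /u divr_gt0 //; lra.
have z2 : 2 < z by rewrite /z ltr_pdivlMr; lra.
pose M := a * u ^+ 2.
have M0 : 0 < M by rewrite /M mulr_gt0 // exprn_gt0.
have [beta [gamma [c [Kbeta [Kgamma [Ec [c0 c1]]]]]]] : exists beta gamma c,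
    K beta /\ K gamma /\ b * beta ^+ 2 - a * b * gamma ^+ 2 = c /\ 0 < c /\ c < 1.
  have cc (e : R) : 0 < e -> 0 < e * (1 / (e + 1)) ^+ 2 /\ e * (1 / (e + 1)) ^+ 2 < 1.
    move=> e0; split; first by rewrite mulr_gt0 // exprn_gt0 // divr_gt0 //; lra.
    have E : (e * (1 / (e + 1)) ^+ 2) * (e + 1) ^+ 2 = e.
      by field; rewrite gt_eqF //; lra.
    have e10 : 0 < e + 1 by lra.
    move: E; set c := e * _ => E; nra.
  have Kinv (e : R) : K e -> K (1 / (e + 1)).
    by move=> Ke; apply: sfdiv => //; [apply: sf1 | apply: sfD => //; apply: sf1].
  case: (ltrP 0 b) => hb0.
    exists (1 / (b + 1)), 0, (b * (1 / (b + 1)) ^+ 2).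
    split; first exact: Kinv.
    split; first exact: sf0.
    split; first by ring.
    exact: cc.
  have hb1 : b < 0 by rewrite lt_neqAle hb.
  have e0 : 0 < - (a * b) by nra.
  exists 0, (1 / (- (a * b) + 1)), (- (a * b) * (1 / (- (a * b) + 1)) ^+ 2).
  split; first exact: sf0.
  split; first by apply: Kinv; apply: (sfN hS); apply: (sfM hS).
  split; first by ring.
  exact: cc.
pose eta := Num.min (c * M) (1 / 2).
have cM0 : 0 < c * M by rewrite mulr_gt0.
have eta0 : 0 < eta by rewrite lt_min cM0 /=; lra.
have etaM : eta <= c * M by rewrite ge_min lexx.
have eta2 : eta <= 1 / 2 by rewrite ge_min lexx orbT.
pose Lo := Num.sqrt ((1 - c - eta) / a).
pose Up := Num.sqrt ((1 - c) / a).
have Up0 : 0 < (1 - c) / a by rewrite divr_gt0 //; lra.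
have LU : Lo < Up.
  rewrite /Lo /Up ltr_sqrt //.
  have -> : (1 - c - eta) / a = (1 - c) / a - eta / a by field; rewrite gt_eqF.
  have : 0 < eta / a by rewrite divr_gt0.
  lra.
have [q] := rat_in_itvoo LU; rewrite in_itv /= => /andP[hq1 hq2].
pose al : R := ratr q.
have Lo0 : 0 <= Lo by apply: sqrtr_ge0.
have al0 : 0 < al by rewrite /al; lra.
have al_up : a * al ^+ 2 < 1 - c.
  have : al ^+ 2 < Up ^+ 2 by rewrite /al; nra.
  rewrite sqr_sqrtr ?(ltW Up0) // ltr_pdivlMr // => h; lra.
have al_lo : 1 - c - eta < a * al ^+ 2.
  case: (lerP 0 ((1 - c - eta) / a)) => h.
    have : Lo ^+ 2 < al ^+ 2 by rewrite /al; nra.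
    rewrite sqr_sqrtr // ltr_pdivrMr // => h'; lra.
  move: h; rewrite ltr_pdivrMr // mul0r => h.
  have : 0 < a * al ^+ 2 by rewrite mulr_gt0 // exprn_gt0.
  lra.
pose ep := 1 - (a * al ^+ 2 + c).
have ep0 : 0 < ep by rewrite /ep; lra.
have epe : ep < eta by rewrite /ep; lra.
have ep0' : ep != 0 by rewrite gt_eqF.
have u0' : u != 0 by rewrite gt_eqF.
have al0' : al != 0 by rewrite gt_eqF.
pose x := 2 * a * al * u / ep.
pose y := (2 - ep) * u / ep.
pose v := 2 * a * gamma * u / ep.
pose w := 2 * beta * u / ep.
have Kc : K c by rewrite -Ec; cl hS.
have Kt : K t by rewrite /t /w0; cl hS.
have Ku : K u by rewrite /u /tau; cl hS.
have Kep : K ep by rewrite /ep /al; cl hS.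
exists x, y, z, u, v, w.
split.
  split; first by rewrite /x /al; cl hS.
  split; first by rewrite /y; cl hS.
  split; first by rewrite /z /tau; cl hS.
  split; first by [].
  split; first by rewrite /v; cl hS.
  by rewrite /w; cl hS.
split.
  have E : x ^+ 2 - a * y ^+ 2 + a * u ^+ 2 - b * v ^+ 2 + a * b * w ^+ 2 =
    a * u ^+ 2 / ep ^+ 2 * (4 * (a * al ^+ 2 + (b * beta ^+ 2 - a * b * gamma ^+ 2))
      - (2 - ep) ^+ 2 + ep ^+ 2).
    by rewrite /x /y /v /w; field; sc.
  rewrite E Ec.
  have -> : 4 * (a * al ^+ 2 + c) - (2 - ep) ^+ 2 + ep ^+ 2 = 0 by rewrite /ep; ring.
  by rewrite mulr0.
split.
  by rewrite /z /u /tau; field; sc.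
have Er : y / u = (2 - ep) / ep.
  by rewrite /y; field; rewrite ep0' u0'.
split.
  move=> t'; split => [Hg | Kt'].
    apply: Hg => // e'; rewrite !inE => /or3P[] /eqP ->; last by rewrite /z /tau; cl hS.
      by rewrite /x /al; cl hS.
    by rewrite /y; cl hS.
  move=> F hF HF.
  have Fx : F x by apply: HF; rewrite !inE eqxx.
  have Fr : F (y / u) by apply: HF; rewrite !inE eqxx orbT.
  have Fz : F z by apply: HF; rewrite !inE eqxx !orbT.
  apply: (Pth0 _ Kt' F hF).
  have Eep : ep = 2 / (y / u + 1).
  by rewrite Er; field; sc.
  have Fep : F ep by rewrite Eep; cl hF.
  have Etau : tau = (z - 2) / (z + 2).
  by rewrite /z; field; sc; rewrite gt_eqF //; lra.
  have Ftau : F tau by rewrite Etau; cl hF.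
  have Eau : a * u = x * ep / (2 * al) by rewrite /x; field; sc.
  have Fau : F (a * u) by rewrite Eau /al; cl hF.
  have Eat : a * t = a * u * (1 - tau) / 4 by rewrite /u; field; sc.
  have Fat : F (a * t) by rewrite Eat; cl hF.
  have Et : t = tau / (a * t).
    by rewrite /tau; field; rewrite !gt_eqF.
  have Ft : F t by rewrite Et; cl hF.
  have Eth : th0 = t * Nr - n%:R.
    by rewrite /t /w0; field; rewrite gt_eqF //; lra.
  by rewrite Eth; cl hF.
split.
- by [].
- have -> : y * z / (2 * u) = (2 - ep) * z / (2 * ep) by rewrite /y; field; sc.
  have x0 : 0 < x.
    by rewrite /x divr_gt0 // (mulr_gt0 _ u0) // (mulr_gt0 _ al0) // mulr_gt0.
  have : 2 < (2 - ep) * z / (2 * ep).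
    rewrite ltr_pdivlMr; last by rewrite mulr_gt0.
    nra.
  lra.
- by rewrite Er ltr_pdivlMr //; lra.
- by [].
- have -> : a * b * w ^+ 2 - b * v ^+ 2 = 4 * M * c / ep ^+ 2.
    by rewrite /w /v /M -Ec; field; sc.
  rewrite ltr_pdivlMr; last by rewrite exprn_gt0.
  nra.
Qed.
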